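(* Consider $N$ users indexed by $\mathcal{U}=\{1,\dots,N\}$ with fixed channel power gains $h_1,\dots,h_N>0$, noise variance $\eta>0$, target throughputs $\theta_1,\dots,\theta_N>0$, and strategy sets $\mathcal{P}^i=[0,P_i^{max}]$ with $P_i^{max}>0$. For $\mathbf{P}\in\prod_i\mathcal{P}^i$ let $r_i(\mathbf{P})=\log_2\!\big(1+\frac{h_iP_i}{\eta+\sum_{j\neq i}h_jP_j}\big)$, and suppose the set $\mathcal{S}$ of profiles with $r_i(\mathbf{P})\ge\theta_i$ for all $i$ is non-empty. Let $\mathbf{P}^+$ be the efficient satisfaction equilibrium, i.e. the minimizer of $\sum_iP_i$ over $\mathcal{S}$. If for users $i,j$ we have $\theta_i\le\theta_j$, then $P_i^+h_i\le P_j^+h_j$. *)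

(* Defs.v *)
From HB Require Import structures.
From mathcomp Require Import all_boot all_order all_algebra.
From mathcomp Require Import all_classical all_reals all_analysis.
Set Implicit Arguments. Unset Strict Implicit. Unset Printing Implicit Defensive.
Import Order.TTheory GRing.Theory Num.Theory.
Local Open Scope ring_scope.

(* Users are indexed by 'I_N (i.e. {0,...,N-1}, standing for {1,...,N}). *)

Definition log2 (R : realType) (x : R) : R := ln x / ln 2.

Definition rate (R : realType) (N : nat) (h : 'I_N -> R) (eta : R)
  (P : 'I_N -> R) (i : 'I_N) : R :=
  log2 (1 + h i * P i / (eta + \sum_(j < N | j != i) h j * P j)).

Definition satisfying (R : realType) (N : nat) (h : 'I_N -> R) (eta : R)
  (theta Pmax : 'I_N -> R) (P : 'I_N -> R) : Prop :=
  (forall i, 0 <= P i <= Pmax i) /\ (forall i, theta i <= rate h eta P i).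

Definition efficient_SE (R : realType) (N : nat) (h : 'I_N -> R) (eta : R)
  (theta Pmax : 'I_N -> R) (Pp : 'I_N -> R) : Prop :=
  satisfying h eta theta Pmax Pp /\
  (forall P, satisfying h eta theta Pmax P -> \sum_(k < N) Pp k <= \sum_(k < N) P k).

(* Main.v *)
Require Import Defs.
From mathcomp Require Import all_boot all_order all_algebra.
From mathcomp Require Import all_classical all_reals all_analysis.
Import Order.TTheory GRing.Theory Num.Theory.
Local Open Scope ring_scope.

Lemma log2_le (R : realType) (x y : R) : 0 < x -> x <= y -> log2 x <= log2 y.
Proof.
move=> x0 xy; rewrite /log2; apply: ler_wpM2r.
  by rewrite invr_ge0 ltW // ln_gt0 // ltr1n.
by rewrite ler_ln // posrE (lt_le_trans x0).
Qed.

Lemma rate_mono (R : realType) (a a' d d' : R) : 0 <= a -> a <= a' -> 0 < d' -> d' <= d ->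
  log2 (1 + a / d) <= log2 (1 + a' / d').
Proof.
move=> a0 aa d0 dd; apply: log2_le.
  by rewrite ltr_pwDl // divr_ge0 // ltW // (lt_le_trans d0).
rewrite lerD2l; apply: (le_trans (y := a / d')).
  by apply: ler_wpM2l => //; rewrite lef_pV2 // posrE (lt_le_trans d0).
by apply: ler_wpM2r => //; rewrite invr_ge0 ltW.
Qed.

Theorem proposition3 (R : realType) (N : nat) (h : 'I_N -> R) (eta : R)
  (theta Pmax : 'I_N -> R)
  (hpos : forall i, 0 < h i) (etapos : 0 < eta)
  (thetapos : forall i, 0 < theta i) (Pmaxpos : forall i, 0 < Pmax i)
  (Snonempty : exists P, satisfying h eta theta Pmax P)
  (Pp : 'I_N -> R) (hPp : efficient_SE h eta theta Pmax Pp)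
  (i j : 'I_N) (hij : theta i <= theta j) :
  Pp i * h i <= Pp j * h j.
Proof.
case: hPp => [[Pb Pr] Pmin].
rewrite leNgt; apply/negP => Hlt.
have Pge0 k : 0 <= Pp k by case/andP: (Pb k).
have hPge0 k : 0 <= h k * Pp k by rewrite mulr_ge0 // ltW.
set P' := fun k => if k == i then Pp j * h j / h i else Pp k.
have hP'i : h i * P' i = Pp j * h j.
  by rewrite /P' eqxx mulrC divfK // gt_eqF.
have P'le k : h k * P' k <= h k * Pp k.
  case: (eqVneq k i) => [->|ki]; first by rewrite hP'i [h i * _]mulrC ltW.
  by rewrite /P' (negbTE ki).
have P'ge0 k : 0 <= h k * P' k.
  case: (eqVneq k i) => [->|ki]; first by rewrite hP'i mulr_ge0 // ltW.
  by rewrite /P' (negbTE ki).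
have dpos (Q : 'I_N -> R) k : (forall l, 0 <= h l * Q l) ->
    0 < eta + \sum_(l < N | l != k) h l * Q l.
  by move=> HQ; apply: (lt_le_trans etapos); rewrite lerDl sumr_ge0.
have ij : i != j by apply/eqP => E; move: Hlt; rewrite E ltxx.
have P'iltPi : P' i < Pp i.
  by rewrite -(ltr_pM2l (hpos i)) hP'i [h i * _]mulrC.
have sat : satisfying h eta theta Pmax P'.
  split.
    move=> k; case: (eqVneq k i) => [->|ki]; last by rewrite /P' (negbTE ki); exact: Pb.
    apply/andP; split.
      by rewrite -(pmulr_rge0 _ (hpos i)) hP'i mulr_ge0 // ltW.
    by apply: le_trans (ltW P'iltPi) _; case/andP: (Pb i).
  move=> k; case: (eqVneq k i) => [->|ki].
    apply: (le_trans hij); apply: (le_trans (Pr j)); rewrite /rate hP'i.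
    apply: rate_mono => //; first by rewrite mulrC.
      exact: dpos.
    have E1 : \sum_(l < N) h l * Pp l = h i * Pp i + \sum_(l < N | l != i) h l * Pp l
      by rewrite (bigD1 i).
    have E2 : \sum_(l < N) h l * Pp l = h j * Pp j + \sum_(l < N | l != j) h l * Pp l
      by rewrite (bigD1 j).
    have Esum : \sum_(l < N | l != i) h l * P' l = \sum_(l < N | l != i) h l * Pp l.
      by apply: eq_bigr => l /negbTE li; rewrite /P' li.
    rewrite Esum lerD2l.
    have : h j * Pp j + \sum_(l < N | l != i) h l * Pp l <=
           h i * Pp i + \sum_(l < N | l != i) h l * Pp l.
      by rewrite lerD2r mulrC [h i * _]mulrC ltW.
    rewrite -E1 E2 lerD2l.
    by [].
  apply: le_trans (Pr k) _; rewrite /rate; apply: rate_mono.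
  - exact: hPge0.
  - by rewrite /P' (negbTE ki).
  - exact: dpos.
  - by rewrite lerD2l; apply: ler_sum => l _.
have := Pmin _ sat.
rewrite (bigD1 i) //= (bigD1 i (P := predT)) //=.
have -> : \sum_(l < N | l != i) P' l = \sum_(l < N | l != i) Pp l.
  by apply: eq_bigr => l /negbTE li; rewrite /P' li.
by rewrite lerD2r leNgt P'iltPi.
Qed.
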